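(* $\mathcal{H}_{R_0,r}(q)$ is isomorphic as an $R_0$-algebra to the $\mathbb{Z}_2$-crossed product $\mathcal{H}^1_{R_0,r}(q)^{\psi_0}_{\alpha_0}[\mathbb{Z}_2]$; an isomorphism is given by $a_1u_1+a_2u_{-1}\mapsto a_1+a_2T'_1$ ($a_1,a_2\in\mathcal{H}^1_{R_0,r}(q)$). In particular $\mathcal{H}_{R_0,r}(q)=\mathcal{H}^1_{R_0,r}(q)\oplus\mathcal{H}^1_{R_0,r}(q)T'_1$.
   Context: $R_0$ is a commutative domain with invertible elements $q$, $2$, $q+q^{-1}$; $r\ge2$; $\mathcal{H}_{R_0,r}(q)$ is the type $A$ Iwahori–Hecke algebra with generators $T_1,\dots,T_{r-1}$, relations $T_i^2=(q-q^{-1})T_i+1$, $T_iT_{i+1}T_i=T_{i+1}T_iT_{i+1}$, $T_iT_j=T_jT_i$ ($|i-j|>1$); $T'_i=\frac{2T_i-(q-q^{-1})}{q+q^{-1}}$; the Goldman involution is the algebra automorphism with $\hat T_i=(q-q^{-1})-T_i$, and $\mathcal{H}^1_{R_0,r}(q)=\{X:\hat X=X\}$. $\mathbb{Z}_2=\{1,-1\}$ multiplicatively. $\psi_0(1)=\mathrm{id}$, $\psi_0(-1)(T)=T'_1TT'_1$, $\alpha_0\equiv1$. For a crossed system $(A,G,\psi,\alpha)$ (maps $\psi:G\to\operatorname{Aut}(A)$, ${}^\sigma a:=\psi(\sigma)(a)$, and $\alpha:G\times G\to A^\times$ satisfying ${}^\sigma({}^\tau a)=\alpha(\sigma,\tau){}^{\sigma\tau}a\,\alpha(\sigma,\tau)^{-1}$,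 the cocycle identity ${}^{\sigma_1}\alpha(\sigma_2,\sigma_3)\alpha(\sigma_1,\sigma_2\sigma_3)=\alpha(\sigma_1,\sigma_2)\alpha(\sigma_1\sigma_2,\sigma_3)$, and $\alpha(\sigma,1)=\alpha(1,\sigma)=1$), the crossed product $A^\psi_\alpha[G]$ is the free left $A$-module with basis $\{u_\sigma:\sigma\in G\}$ and multiplication $(a_1u_\sigma)(a_2u_\tau)=a_1\,{}^\sigma a_2\,\alpha(\sigma,\tau)\,u_{\sigma\tau}$. *)

(* Defs.v *)
From HB Require Import structures.
From mathcomp Require Import all_boot all_order all_algebra.
Set Implicit Arguments. Unset Strict Implicit. Unset Printing Implicit Defensive.
Import GRing.Theory.
Local Open Scope ring_scope.

Definition is_alg_hom (R : comNzRingType) (A B : algType R) (f : A -> B) : Prop :=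
  [/\ forall x y, f (x + y) = f x + f y,
      forall x y, f (x * y) = f x * f y,
      f 1 = 1 &
      forall (k : R) x, f (k *: x) = k *: f x].

(* Hecke relations for generators t 1, ..., t (r-1) (indices outside 1..r-1 unused). *)
Definition hecke_rel (R : idomainType) (q : R) (r : nat) (B : algType R)
    (t : nat -> B) : Prop :=
  [/\ forall i, (0 < i < r)%N ->
        t i ^+ 2 = (q - q^-1) *: t i + 1,
      forall i, (0 < i)%N -> (i.+1 < r)%N ->
        t i * t i.+1 * t i = t i.+1 * t i * t i.+1 &
      forall i j, (0 < i < r)%N -> (0 < j < r)%N -> (j.+1 < i \/ i.+1 < j)%N ->
        t i * t j = t j * t i].

(* (A, T) is the Iwahori-Hecke algebra H_{R0,r}(q): the R0-algebra presented by
   generators T_1..T_{r-1} and the Hecke relations (universal property). *)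
Definition is_hecke_algebra (R : idomainType) (q : R) (r : nat) (A : algType R)
    (T : nat -> A) : Prop :=
  hecke_rel q r T /\
  forall (B : algType R) (t : nat -> B), hecke_rel q r t ->
    exists! f : A -> B, is_alg_hom f /\ forall i, (0 < i < r)%N -> f (T i) = t i.

Definition Tprime (R : idomainType) (q : R) (A : algType R) (T : nat -> A) (i : nat) : A :=
  (q + q^-1)^-1 *: (2%:R *: T i - (q - q^-1)%:A).

Definition is_goldman (R : idomainType) (q : R) (r : nat) (A : algType R)
    (T : nat -> A) (g : A -> A) : Prop :=
  is_alg_hom g /\ forall i, (0 < i < r)%N -> g (T i) = (q - q^-1)%:A - T i.

Definition H1 (R : idomainType) (q : R) (r : nat) (A : algType R) (T : nat -> A)
    (X : A) : Prop :=
  forall g, is_goldman q r T g -> g X = X.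

Inductive Z2 := Z2one | Z2neg.
Definition Z2mul (s t : Z2) : Z2 :=
  match s, t with
  | Z2one, u => u
  | Z2neg, Z2one => Z2neg
  | Z2neg, Z2neg => Z2one
  end.

(* Crossed system (S, Z2, psi, alpha), where the algebra S is given as a
   subset S of an ambient ring A (with the induced operations). *)
Definition is_crossed_system (A : nzRingType) (S : A -> Prop)
    (psi : Z2 -> A -> A) (alpha : Z2 -> Z2 -> A) : Prop :=
  [/\
      forall s, (forall a, S a -> S (psi s a)) /\
        (forall a b, S a -> S b -> psi s (a + b) = psi s a + psi s b) /\
        (forall a b, S a -> S b -> psi s (a * b) = psi s a * psi s b) /\
        psi s 1 = 1 /\
        (forall b, S b -> exists! a, S a /\ psi s a = b),
      forall s t, S (alpha s t) /\
        exists beta, S beta /\ alpha s t * beta = 1 /\ beta * alpha s t = 1,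
      forall s t a, S a -> forall beta, S beta -> alpha s t * beta = 1 ->
        beta * alpha s t = 1 ->
        psi s (psi t a) = alpha s t * psi (Z2mul s t) a * beta,
      forall s1 s2 s3,
        psi s1 (alpha s2 s3) * alpha s1 (Z2mul s2 s3) =
        alpha s1 s2 * alpha (Z2mul s1 s2) s3 &
      forall s, alpha s Z2one = 1 /\ alpha Z2one s = 1].

(* Elements of the crossed product S^psi_alpha[Z2]: x = x(1) u_1 + x(-1) u_{-1}.
   Multiplication (a1 u_s)(a2 u_t) = a1 psi_s(a2) alpha(s,t) u_{st}, i.e.
   (x y)(rho) = sum_{s t = rho} x(s) psi_s(y(t)) alpha(s,t); in Z2, t = s rho. *)
Definition cp_mul (A : nzRingType) (psi : Z2 -> A -> A) (alpha : Z2 -> Z2 -> A)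
    (x y : Z2 -> A) : Z2 -> A :=
  fun rho =>
    x Z2one * psi Z2one (y (Z2mul Z2one rho)) * alpha Z2one (Z2mul Z2one rho) +
    x Z2neg * psi Z2neg (y (Z2mul Z2neg rho)) * alpha Z2neg (Z2mul Z2neg rho).

Definition cp_add (A : nzRingType) (x y : Z2 -> A) : Z2 -> A := fun s => x s + y s.

Definition cp_one {A : nzRingType} : Z2 -> A :=
  fun s => if s is Z2one then 1 else 0.

Definition cp_scale (R : comNzRingType) (A : algType R) (k : R) (x : Z2 -> A) : Z2 -> A :=
  fun s => k *: x s.

Definition psi0 (R : idomainType) (q : R) (A : algType R) (T : nat -> A) : Z2 -> A -> A :=
  fun s a => if s is Z2one then a else Tprime q T 1 * a * Tprime q T 1.
Definition alpha0 {A : nzRingType} : Z2 -> Z2 -> A := fun _ _ => 1.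

Definition Phi (R : idomainType) (q : R) (A : algType R) (T : nat -> A) (x : Z2 -> A) : A :=
  x Z2one + x Z2neg * Tprime q T 1.

(* Main.v *)
From HB Require Import structures.
Require Import Defs.
From mathcomp Require Import all_boot all_order all_algebra.
From mathcomp Require Import ring.
From Stdlib Require Import FunctionalExtensionality.
Import GRing.Theory.
Set Implicit Arguments. Unset Strict Implicit. Unset Printing Implicit Defensive.
Local Open Scope ring_scope.

Definition lin (R : comNzRingType) (A : algType R) (t : A) (a b : R) : A :=
  a *: 1 + b *: t.

Lemma linD (R : comNzRingType) (A : algType R) (t : A) a b a' b' :
  lin t a b + lin t a' b' = lin t (a + a') (b + b').
Proof. by rewrite /lin !scalerDl addrACA. Qed.
Lemma linN (R : comNzRingType) (A : algType R) (t : A) a b :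
  - lin t a b = lin t (-a) (-b).
Proof. by rewrite /lin opprD !scaleNr. Qed.
Lemma linZ (R : comNzRingType) (A : algType R) (t : A) k a b :
  k *: lin t a b = lin t (k * a) (k * b).
Proof. by rewrite /lin scalerDr !scalerA. Qed.
Lemma lin1 (R : comNzRingType) (A : algType R) (t : A) a :
  a *: (1 : A) = lin t a 0.
Proof. by rewrite /lin scale0r addr0. Qed.
Lemma lint (R : comNzRingType) (A : algType R) (t : A) b :
  b *: t = lin t 0 b.
Proof. by rewrite /lin scale0r add0r. Qed.
Lemma lin_eq (R : comNzRingType) (A : algType R) (t : A) a b a' b' :
  a = a' -> b = b' -> lin t a b = lin t a' b'.
Proof. by move=> -> ->. Qed.
Lemma linM (R : comNzRingType) (A : algType R) (t : A) c a b a' b' :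
  t * t = c *: t + 1 ->
  lin t a b * lin t a' b' = lin t (a * a' + b * b') (a * b' + b * a' + b * b' * c).
Proof.
move=> htt.
rewrite [lin t a b]/lin [lin t a' b']/lin mulrDl !mulrDr.
rewrite -!scalerAl -!scalerAr !mul1r !mulr1 htt scalerDr !scalerA !(lin1 t) !(lint t) !linD.
rewrite linZ !linD; by apply: lin_eq; ring.
Qed.
Lemma braid_inv (A : pzRingType) (a a' b b' : A) :
  a * a' = 1 -> a' * a = 1 -> b * b' = 1 -> b' * b = 1 ->
  a * b * a = b * a * b -> a' * b' * a' = b' * a' * b'.
Proof.
move=> h1 h2 h3 h4 hb.
have e1 : (a' * b' * a') * (a * b * a) = 1.
  by rewrite !mulrA -(mulrA (a' * b') a' a) h2 mulr1 -(mulrA a' b' b) h4 mulr1 h2.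
have e2 : (b * a * b) * (b' * a' * b') = 1.
  by rewrite !mulrA -(mulrA (b * a) b b') h3 mulr1 -(mulrA b a a') h1 mulr1 h3.
by rewrite -[LHS]mulr1 -e2 -hb mulrA e1 mul1r.
Qed.
Lemma comm_inv (A : pzRingType) (a a' b b' : A) :
  a * a' = 1 -> a' * a = 1 -> b * b' = 1 -> b' * b = 1 ->
  a * b = b * a -> a' * b' = b' * a'.
Proof.
move=> h1 h2 h3 h4 hc.
have e1 : (b' * a') * (a * b) = 1 by rewrite mulrA -(mulrA b') h2 mulr1 h4.
have e2 : (b * a) * (a' * b') = 1 by rewrite mulrA -(mulrA b) h1 mulr1 h3.
by rewrite -[LHS]mul1r -e1 hc -mulrA e2 mulr1.
Qed.

Theorem theorem3p9 (R0 : idomainType) (q : R0) (r : nat) (A : algType R0)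
    (T : nat -> A) :
  q \is a GRing.unit -> (2%:R : R0) \is a GRing.unit ->
  (q + q^-1) \is a GRing.unit -> (2 <= r)%N ->
  is_hecke_algebra q r T ->
  (* (H^1, Z2, psi0, alpha0) is a crossed system *)
  is_crossed_system (H1 q r T) (psi0 q T) alpha0 /\
  (* Phi : H^1 psi0_alpha0 [Z2] -> H is a bijection, i.e. H = H^1 (+) H^1 T'_1 *)
  (forall X : A, exists! x : Z2 -> A,
      (forall s, H1 q r T (x s)) /\ Phi q T x = X) /\
  (* Phi is an R0-algebra homomorphism *)
  (forall x y : Z2 -> A, (forall s, H1 q r T (x s)) -> (forall s, H1 q r T (y s)) ->
      Phi q T (cp_add x y) = Phi q T x + Phi q T y /\
      Phi q T (cp_mul (psi0 q T) alpha0 x y) = Phi q T x * Phi q T y) /\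
  (forall (k : R0) (x : Z2 -> A), Phi q T (cp_scale k x) = k *: Phi q T x) /\
  Phi q T cp_one = 1.
Proof.
move=> qU twoU dU r2 [hT univ].
have r1 : (0 < 1 < r)%N by exact: r2.
have hT0 := hT; case: hT0 => hsq hbr hcm.
have htt : T 1 * T 1 = (q - q^-1) *: T 1 + 1 by rewrite -expr2 hsq.
have hq : q * q^-1 = 1 := mulrV qU.
have hd : (q + q^-1) * (q + q^-1)^-1 = 1 := mulrV dU.
set T1 := Tprime q T 1.
have hT1 : T1 = lin (T 1) (- ((q + q^-1)^-1 * (q - q^-1))) ((q + q^-1)^-1 * 2%:R).
  rewrite /T1 /Tprime (lint (T 1)) (lin1 (T 1)) linN linD linZ.
  by apply: lin_eq; ring.
have hTT : T1 * T1 = 1.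
  rewrite hT1 (linM _ _ _ _ htt).
  have -> : (1 : A) = lin (T 1) 1 0 by rewrite /lin scale1r scale0r addr0.
  apply: lin_eq; last by ring.
  transitivity (((q + q^-1) * (q + q^-1)^-1) ^+ 2
     - 4%:R * (q + q^-1)^-1 ^+ 2 * (q * q^-1 - 1)); first by ring.
  by rewrite hq hd subrr; ring.
have inv1 : forall i, (0 < i < r)%N ->
   T i * (T i - (q - q^-1)%:A) = 1 /\ (T i - (q - q^-1)%:A) * T i = 1.
  move=> i hi; split.
    by rewrite mulrBr mulr_algr -expr2 hsq // addrAC subrr add0r.
  by rewrite mulrBl mulr_algl -expr2 hsq // addrAC subrr add0r.
pose tg := fun i => (q - q^-1)%:A - T i.
have htg : hecke_rel q r tg.
  split.
  - move=> i hi; have [h1 h2] := inv1 i hi.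
    by rewrite /tg -opprB sqrrN expr2 [in LHS]mulrBr h2 mulr_algr scalerN addrC.
  - move=> i i0 ir.
    have hi : (0 < i < r)%N by rewrite i0 ltnW.
    have hi' : (0 < i.+1 < r)%N by rewrite ir.
    have [h1 h2] := inv1 i hi; have [h3 h4] := inv1 i.+1 hi'.
    rewrite /tg -(opprB (T i)) -(opprB (T i.+1)) !mulrNN !mulrN; congr (- _).
    exact: braid_inv h1 h2 h3 h4 (hbr i i0 ir).
  - move=> i j hi hj hij.
    have [h1 h2] := inv1 i hi; have [h3 h4] := inv1 j hj.
    rewrite /tg -(opprB (T i)) -(opprB (T j)) !mulrNN.
    exact: comm_inv h1 h2 h3 h4 (hcm i j hi hj hij).
have [g0 [[[gD gM g1 gZ] gT] gU]] := univ A tg htg.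
have g00 : g0 0 = 0 by have := gZ 0 0; rewrite !scale0r.
have gN : forall x, g0 (- x) = - g0 x.
  by move=> x; rewrite -scaleN1r gZ scaleN1r.
have gB : forall x y, g0 (x - y) = g0 x - g0 y by move=> x y; rewrite gD gN.
have gA : forall k, g0 k%:A = k%:A by move=> k; rewrite gZ g1.
have gt1 : g0 (T 1) = (q - q^-1)%:A - T 1 := gT 1 r1.
have glin : forall a b, g0 (lin (T 1) a b) = lin (T 1) (a + b * (q - q^-1)) (- b).
  move=> a b; rewrite /lin gD !gZ g1 gt1 scalerBr scalerA scalerDl scaleNr addrA.
  done.
have gT1 : g0 T1 = - T1.
  by rewrite hT1 glin linN; apply: lin_eq; ring.
have gunique : forall g, is_goldman q r T g -> g = g0.
  move=> g [hg hgT]; symmetry; apply: gU; split => //.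
have hH1 : forall X, H1 q r T X <-> g0 X = X.
  move=> X; split.
    by move=> h; apply: h; split => //; split.
  by move=> hX g hg; rewrite (gunique g hg).
have ginv : forall X, g0 (g0 X) = X.
  have [f1 [_ fU]] := univ A T hT.
  have e1 : f1 = id by apply: fU; split => //; split.
  have e2 : f1 = (fun X => g0 (g0 X)).
    apply: fU; split.
      split => /=.
      - by move=> x y; rewrite !gD.
      - by move=> x y; rewrite !gM.
      - by rewrite !g1.
      - by move=> k x; rewrite !gZ.
    by move=> i hi; rewrite gT // /tg gB gA gT // opprB addrC subrK.
  by move=> X; have := congr1 (fun f => f X) (etrans (esym e1) e2).
have TaT : forall x, T1 * (T1 * x * T1) * T1 = x.
  by move=> x; rewrite !mulrA hTT mul1r -mulrA hTT mulr1.
have psiN : forall a, psi0 q T Z2neg a = T1 * a * T1 by [].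
have psi1 : forall a, psi0 q T Z2one a = a by [].
split.
  split.
  - case; repeat match goal with |- _ /\ _ => split end.
    + by [].
    + by [].
    + by [].
    + by [].
    + by move=> b hb; exists b; split => // a' [].
    + move=> a /hH1 ha; apply/hH1; rewrite psiN !gM gT1 ha !mulrN !mulNr opprK.
      done.
    + by move=> a b _ _; rewrite !psiN mulrDr mulrDl.
    + move=> a b _ _; rewrite !psiN !mulrA -(mulrA (T1 * a) T1 T1) hTT mulr1.
      by rewrite -!mulrA.
    + by rewrite psiN mulr1 hTT.
    + move=> b /hH1 hb; exists (T1 * b * T1); split.
        split; last by rewrite psiN TaT.
        by apply/hH1; rewrite !gM gT1 hb !mulrN !mulNr opprK.
      by move=> a' [_ <-]; rewrite psiN TaT.
  - move=> s t; split; first by apply/hH1; rewrite /alpha0 g1.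
    by exists 1; split; [apply/hH1; rewrite g1 | rewrite /alpha0 mulr1].
  - move=> s t a _ beta _; rewrite /alpha0 mul1r => -> _; rewrite mul1r mulr1.
    by case: s; case: t => //; rewrite !psiN TaT.
  - by move=> s1 s2 s3; rewrite /alpha0 !mulr1; case: s1 => //; rewrite psiN mulr1 hTT.
  - by [].
split.
  move=> X.
  pose x := fun s => if s is Z2one then (2%:R : R0)^-1 *: (X + g0 X)
                     else ((2%:R : R0)^-1 *: (X - g0 X)) * T1.
  have two : forall Y : A, (2%:R : R0)^-1 *: (Y + Y) = Y.
    by move=> Y; rewrite -mulr2n -scaler_nat scalerA mulVr // scale1r.
  exists x; split.
    split.
      case; apply/hH1 => /=.
        by rewrite gZ gD ginv addrC.
      rewrite gM gZ gB ginv gT1 mulrN -mulNr -scalerN opprB //.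
    rewrite /Phi /= -mulrA hTT mulr1 -scalerDr addrACA subrr addr0.
    exact: two.
  move=> y [hy hX]; apply: functional_extensionality => s.
  have hy1 := proj1 (hH1 _) (hy Z2one); have hyn := proj1 (hH1 _) (hy Z2neg).
  rewrite /x -hX /Phi gD gM hy1 hyn gT1 mulrN.
  case: s.
    by rewrite addrACA subrr addr0 two.
  rewrite opprD opprK addrACA subrr add0r two -mulrA hTT mulr1 //.
split.
  move=> x y _ _; split.
    by rewrite /Phi /cp_add mulrDl addrACA.
  rewrite /Phi /cp_mul /alpha0 /= -/T1 !mulr1 mulrDl !mulrDr.
  rewrite !mulrDl !mulrA -(mulrA (x Z2neg * T1 * y Z2one) T1 T1) hTT mulr1.
  rewrite -!addrA; congr (_ + _).
  by rewrite [LHS]addrC [X in X + _ = _]addrC -addrA.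
split.
  by move=> k x; rewrite /Phi /cp_scale scalerDr scalerAl.
by rewrite /Phi /cp_one mul0r addr0.
Qed.
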